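(* Let $(X_n,\eta_n)$ be a time-homogeneous Markov chain on a locally finite set $\Sigma\subseteq\mathbb{R}_+\times S$ ($S$ finite), and suppose that for some $p>0$ there is $C_p<\infty$ with $\mathbb{E}_{x,i}[|X_{n+1}-X_n|^p]\le C_p$ for all $(x,i)\in\Sigma$. Let $r\in\mathbb{R}$, $\zeta\in(0,1)$, $E_n=\{|X_{n+1}-X_n|\le X_n^\zeta\}$, and let $g:S\to\mathbb{R}$. Then, as $x\to\infty$, \[\mathbb{E}_{x,i}[(g(\eta_{n+1})X_{n+1}^r-g(\eta_n)X_n^r)\mathbf 1(E_n)]=x^r\sum_{j\in S}(g(j)-g(i))q_{ij}(x)+o(x^r).\]
   Context: $\mathbb{E}_{x,i}[\cdot]=\mathbb{E}[\cdot\mid X_n=x,\eta_n=i]$ and $q_{ij}(x)=\Pr[\eta_{n+1}=j\mid X_n=x,\eta_n=i]$. *)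

(* Defs.v *)
From HB Require Import structures.
From mathcomp Require Import all_boot all_order all_algebra.
From mathcomp Require Import all_classical all_reals.
From mathcomp Require Import ereal topology normedtype sequences esum exp.
Set Implicit Arguments. Unset Strict Implicit. Unset Printing Implicit Defensive.
Import Order.TTheory GRing.Theory Num.Theory.
Local Open Scope classical_set_scope.
Local Open Scope ring_scope.

(* State space Sigma ⊆ R_+ × S, S finite; the one-step transition law of the
   time-homogeneous chain (X_n, eta_n) is a kernel P : state -> state -> R,
   P s t = Pr[(X_{n+1},eta_{n+1}) = t | (X_n,eta_n) = s]. *)

Definition locally_finite_state_space (R : realType) (S : finType)
    (Sigma : set (R * S)) : Prop :=
  (forall s, Sigma s -> 0 <= s.1) /\
  (forall M : R, finite_set [set s | Sigma s /\ s.1 <= M]).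

Definition transition_kernel (R : realType) (S : finType)
    (Sigma : set (R * S)) (P : R * S -> R * S -> R) : Prop :=
  (forall s t, 0 <= P s t) /\
  (forall s, Sigma s -> (\esum_(t in Sigma) (P s t)%:E = 1)%E).

Definition kexpect (R : realType) (S : finType) (Sigma : set (R * S))
    (P : R * S -> R * S -> R) (s : R * S) (f : R * S -> R) : \bar R :=
  ((\esum_(t in Sigma) (Num.max (P s t * f t) 0)%:E)
   - (\esum_(t in Sigma) (Num.max (- (P s t * f t)) 0)%:E))%E.

Definition qprob (R : realType) (S : finType) (Sigma : set (R * S))
    (P : R * S -> R * S -> R) (x : R) (i j : S) : R :=
  fine (\esum_(t in Sigma `&` [set t | t.2 = j]) (P (x, i) t)%:E).

(* Main.v *)
Require Import Defs.
From HB Require Import structures.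
From mathcomp Require Import all_boot all_order all_algebra.
From mathcomp Require Import all_classical all_reals.
From mathcomp Require Import ereal topology normedtype sequences esum exp.
From mathcomp Require Import ring lra.
Import Order.TTheory GRing.Theory Num.Theory.
Local Open Scope classical_set_scope.
Local Open Scope ring_scope.
Definition lst {T : choiceType} (A : set T) : seq T := finmap.enum_fset (fset_set A).

Lemma mem_lst {T : choiceType} (A : set T) t : finite_set A -> (t \in lst A) = (t \in A).
Proof. by move=> fA; rewrite /lst -(in_fset_set fA). Qed.

Section H.
Variable R : realType.

Lemma esum_finset (T : choiceType) (A : set T) (h : T -> R) :
  finite_set A -> (forall t, A t -> 0 <= h t) ->
  (\esum_(t in A) (h t)%:E = (\sum_(t <- lst A) h t)%:E)%E.
Proof.
move=> fA h0; rewrite esum_fset//; last by move=> t; rewrite inE; apply: h0.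
by rewrite fsbig_finite// sumEFin.
Qed.

Lemma esum_supp (T : choiceType) (D B : set T) (h : T -> R) :
  finite_set (D `&` B) -> (forall t, D t -> 0 <= h t) ->
  (forall t, D t -> ~ B t -> h t = 0) ->
  (\esum_(t in D) (h t)%:E = (\sum_(t <- lst (D `&` B)) h t)%:E)%E.
Proof.
move=> fA h0 hz; rewrite (esumID B); last by move=> t /h0; rewrite lee_fin.
rewrite (esum1 (D := D `&` ~` B)); last by move=> t [Dt nBt]; rewrite hz.
by rewrite adde0 esum_finset// => t [/h0].
Qed.

Lemma esum_sub (T : choiceType) (D1 D2 : set T) (h : T -> R) :
  D1 `<=` D2 -> (forall t, D2 t -> 0 <= h t) ->
  (\esum_(t in D1) (h t)%:E <= \esum_(t in D2) (h t)%:E)%E.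
Proof.
move=> s h0; rewrite (esumID D1 D2); last by move=> t /h0; rewrite lee_fin.
rewrite (setIidr s) leeDl// esum_ge0// => t [/h0 ? _]; by rewrite lee_fin.
Qed.

Lemma esum_scale (T : choiceType) (D : set T) (h : T -> R) (c : R) :
  0 < c -> (forall t, D t -> 0 <= h t) ->
  (\esum_(t in D) (h t)%:E <= c^-1%:E * \esum_(t in D) (c * h t)%:E)%E.
Proof.
move=> c0 h0; apply: ge_ereal_sup => _ [X [finX XD]] <-.
rewrite fsbig_finite// sumEFin.
have : ((\sum_(t <- lst X) (c * h t))%:E <= \esum_(t in D) (c * h t)%:E)%E.
  apply: ereal_sup_ubound; exists X => //.
  by rewrite fsbig_finite// sumEFin.
move/(lee_wpmul2l (x := c^-1%:E)); rewrite lee_fin invr_ge0 ltW// => /(_ isT) H.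
apply: le_trans H; rewrite -EFinM lee_fin mulr_sumr.
by rewrite le_eqVlt; apply/orP; left; apply/eqP; apply: eq_bigr => t _;
  rewrite mulrA mulVf ?gt_eqF// mul1r.
Qed.
End H.
Section H2.
Variable R : realType.

Lemma big_thresh (a K : R) : 0 < a -> 0 < K ->
  exists M : R, 0 < M /\ forall x, M <= x -> K <= x `^ a.
Proof.
move=> a0 K0; exists (K `^ a^-1); split; first exact: powR_gt0.
move=> x Mx.
have -> : K = (K `^ a^-1) `^ a.
  by rewrite -powRrM mulVf ?gt_eqF// powRr1// ltW.
apply: ge0_ler_powR => //; first exact: ltW.
- by rewrite nnegrE powR_ge0.
- by rewrite nnegrE (le_trans _ Mx)// powR_ge0.
Qed.

Lemma exp_near0 (y : R) : `|y| <= 1/2 -> `|expR y - 1| <= 2 * `|y|.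
Proof.
move=> yh.
have h1 := expR_ge1Dx y.
have h2 := expR_ge1Dx (- y).
have h3 := expRxMexpNx_1 y.
have E0 := expR_gt0 y.
have N0 := expR_gt0 (- y).
move: yh; rewrite ler_norml => /andP[yl yu].
set E := expR y in h1 h3 E0 *; set F := expR (- y) in h2 h3 N0.
have Hub : E <= 1 + 2 * `|y|.
  have H4 : E * (1 - y) <= 1.
    rewrite -h3; apply: ler_wpM2l; [exact: ltW | lra].
  case: (lerP 0 y) => y0.
    rewrite ger0_norm //; nra.
  rewrite ltr0_norm //; nra.
rewrite ler_norml; apply/andP; split; last lra.
have : 0 <= `|y| by [].
case: (lerP 0 y) => y0; [rewrite ger0_norm // | rewrite ltr0_norm //]; lra.
Qed.

Lemma pow_near1 (r v h : R) : 0 < v -> `|v - 1| <= h -> h <= 1/2 ->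
  `|r| * h <= 1/4 -> `|v `^ r - 1| <= 4 * `|r| * h.
Proof.
move=> v0 vh h2 rh.
have h0 : 0 <= h by apply: le_trans vh.
move: vh; rewrite ler_norml => /andP[vl vu].
have lnub : ln v <= h.
  have L : ln (1 + (v - 1)) <= v - 1 by apply: le_ln1Dx; lra.
  move: L; rewrite addrC subrK; lra.
have lnlb : - (2 * h) <= ln v.
  have vpos : v \in Num.pos by rewrite posrE.
  have : ln (v^-1) <= v^-1 - 1.
    have L : ln (1 + (v^-1 - 1)) <= v^-1 - 1.
      apply: le_ln1Dx; have := invr_gt0 v; rewrite v0 => ?; lra.
    by move: L; rewrite addrC subrK.
  have : v^-1 - 1 <= 2 * h.
    rewrite -(ler_pM2l v0) mulrBr mulfV ?gt_eqF // mulr1; nra.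
  rewrite lnV //; lra.
have lnn : `|ln v| <= 2 * h by rewrite ler_norml; apply/andP; split; lra.
have yb : `|r * ln v| <= 2 * `|r| * h.
  rewrite normrM -mulrA [2 * _]mulrC -mulrA; apply: ler_wpM2l => //.
  by rewrite mulrC.
rewrite /powR gt_eqF //.
have yh : `|r * ln v| <= 1/2 by lra.
have := @exp_near0 _ yh; lra.
Qed.
End H2.
Lemma maxpn (R : realType) (y : R) : Num.max y 0 - Num.max (- y) 0 = y.
Proof.
rewrite /Num.max /=.
case: (ltrP y 0) => h; case: (ltrP (- y) 0) => h'; lra.
Qed.

Lemma maxN0 (R : realType) (y : R) : 0 <= y -> Num.max (- y) 0 = 0.
Proof. move=> y0; rewrite /Num.max /=; case: (ltrP (- y) 0) => h //; lra. Qed.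
Theorem lemma3p5 (R : realType) (S : finType) (Sigma : set (R * S))
    (P : R * S -> R * S -> R) (p Cp : R) (r zeta : R) (g : S -> R) :
  locally_finite_state_space Sigma ->
  transition_kernel Sigma P ->
  0 < p ->
  (forall s, Sigma s ->
     (kexpect Sigma P s (fun t => (`|t.1 - s.1| `^ p)%R) <= Cp%:E)%E) ->
  0 < zeta < 1 ->
  forall (i : S) (eps : R), 0 < eps ->
  exists M : R, forall x : R, Sigma (x, i) -> M <= x ->
    exists e : R, `|e| <= eps * x `^ r /\
      kexpect Sigma P (x, i)
        (fun t => (g t.2 * t.1 `^ r - g i * x `^ r)
                  * (if `|t.1 - x| <= x `^ zeta then 1 else 0))
      = (x `^ r * (\sum_(j : S) (g j - g i) * qprob Sigma P x i j) + e)%:E.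
Proof.
move=> [Sge0 Sfin] [P0 P1] p0 HC /andP[z0 z1] i eps eps0.
pose G := \sum_(j : S) `|g j|.
pose K := \sum_(j : S) `|g j - g i|.
have G0 : 0 <= G by apply: sumr_ge0.
have K0 : 0 <= K by apply: sumr_ge0.
have r0 : 0 <= `|r| by [].
have Cp0 : 0 <= `|Cp| by [].
pose h0 := Num.min (1/2) (Num.min (1/(4*(`|r|+1))) (eps/(8*(`|r|+1)*(G+1)))).
have h0pos : 0 < h0.
  rewrite /h0 !lt_min; apply/andP; split; first lra.
  apply/andP; split; apply: divr_gt0 => //; nra.
have h0a : h0 <= 1/2 by rewrite /h0 ge_min lexx.
have h0b : h0 <= 1/(4*(`|r|+1)) by rewrite /h0 !ge_min lexx orbT.
have h0c : h0 <= eps/(8*(`|r|+1)*(G+1)) by rewrite /h0 !ge_min lexx !orbT.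
pose D := 2 * (K + 1) * (`|Cp| + 1).
have D0 : 0 < D by rewrite /D; nra.
have [M1 [M10 HM1]] := @big_thresh R (1 - zeta) h0^-1
  ltac:(lra) ltac:(by rewrite invr_gt0).
have [M2 [M20 HM2]] := @big_thresh R (zeta * p) (D / eps)
  ltac:(exact: mulr_gt0) ltac:(exact: divr_gt0).
exists (Num.max M1 M2) => x Sx Mx.
have xM1 : M1 <= x by apply: le_trans Mx; rewrite le_max lexx.
have xM2 : M2 <= x by apply: le_trans Mx; rewrite le_max lexx orbT.
have x0 : 0 < x by apply: lt_le_trans xM1.
have xz0 : 0 < x `^ zeta by apply: powR_gt0.
have xzh : x `^ zeta <= h0 * x.
  have e1 : x = x `^ zeta * x `^ (1 - zeta).
    rewrite -powRD; last by apply/implyP => _; rewrite gt_eqF.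
    by rewrite addrC subrK powRr1 // ltW.
  have := HM1 _ xM1 => H.
  rewrite [X in _ <= _ * X]e1.
  have : 1 <= h0 * x `^ (1 - zeta).
    have hi : 0 < h0^-1 by rewrite invr_gt0.
    by rewrite -(ler_pM2l hi) mulr1 mulrA mulVf ?gt_eqF // mul1r.
  move=> H2; nra.
pose c := x `^ (zeta * p).
have c0 : 0 < c by apply: powR_gt0.
have cD : D / eps <= c by apply: HM2.
have cE : c = (x `^ zeta) `^ p by rewrite /c powRrM.
pose Ax := [set t : R * S | `|t.1 - x| <= x `^ zeta].
pose A := Sigma `&` Ax.
have finA : finite_set A.
  apply: sub_finite_set (Sfin (x + x `^ zeta)) => t [St At]; split => //.
  move: At; rewrite /Ax /= ler_norml => /andP[_ ?]; lra.
pose L := lst A.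
have memL t : (t \in L) = (t \in A) by rewrite /L mem_lst.
have kexp : kexpect Sigma P (x, i)
        (fun t => (g t.2 * t.1 `^ r - g i * x `^ r)
                  * (if `|t.1 - x| <= x `^ zeta then 1 else 0)) =
   (\sum_(t <- L) P (x, i) t * (g t.2 * t.1 `^ r - g i * x `^ r))%:E.
  rewrite /kexpect.
  rewrite (@esum_supp R _ Sigma Ax) //; last first.
  - by move=> t _ nA; rewrite ifF ?mulr0 ?maxxx //; apply/negP.
  - by move=> t _; rewrite le_max lexx orbT.
  rewrite (@esum_supp R _ Sigma Ax) //; last first.
  - by move=> t _ nA; rewrite ifF ?mulr0 ?oppr0 ?maxxx //; apply/negP.
  - by move=> t _; rewrite le_max lexx orbT.
  rewrite -EFinB -sumrB; congr EFin; rewrite big_seq [RHS]big_seq.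
  apply: eq_bigr => t; rewrite memL inE => -[_ At].
  by rewrite maxpn ifT // mulr1.
have Eplus : (\esum_(t in Sigma) (Num.max (P (x, i) t * `|t.1 - x| `^ p) 0)%:E
    <= Cp%:E)%E.
  have := HC _ Sx; rewrite /kexpect /=.
  rewrite (@esum1 R _ Sigma (fun t => (Num.max (- (P (x, i) t * `|t.1 - x| `^ p)) 0)%:E)).
    by rewrite sube0.
  by move=> t _; rewrite maxN0 // mulr_ge0 // powR_ge0.
have Bc : (\esum_(t in Sigma `&` ~` Ax) (P (x, i) t)%:E <= (c^-1 * Cp)%:E)%E.
  apply: le_trans (@esum_scale R _ _ _ c c0 _) _; first by move=> t _.
  rewrite EFinM; apply: lee_wpmul2l; first by rewrite lee_fin invr_ge0 ltW.
  apply: le_trans Eplus.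
  have Hs := @esum_sub R _ (Sigma `&` ~` Ax) Sigma
    (fun t => Num.max (P (x, i) t * `|t.1 - x| `^ p) 0) ltac:(by move=> t []).
  apply: le_trans (Hs _); last by move=> t _; rewrite le_max lexx orbT.
  apply: le_esum => t [St nA]; rewrite lee_fin le_max; apply/orP; left.
  have hlt : x `^ zeta < `|t.1 - x| by rewrite ltNge; apply/negP.
  rewrite mulrC ler_wpM2l // cE; apply: ge0_ler_powR;
    [exact: ltW | by rewrite nnegrE powR_ge0 | by rewrite nnegrE | exact: ltW].
have qdec j : exists b, [/\ 0 <= b, b <= c^-1 * Cp &
    qprob Sigma P x i j = \sum_(t <- L) (if t.2 == j then P (x, i) t else 0) + b].
  rewrite /qprob (esumID Ax); last by move=> t _; rewrite lee_fin.
  have e1 : (\esum_(t in (Sigma `&` [set t | t.2 = j]) `&` Ax) (P (x, i) t)%:E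
     = (\sum_(t <- L) (if t.2 == j then P (x, i) t else 0))%:E)%E.
    rewrite setIAC esum_mkcondr.
    rewrite (eq_esum (b := fun t => (if t.2 == j then P (x, i) t else 0)%:E)).
      by rewrite esum_finset // => t _; case: ifP.
    move=> t _; case: (eqVneq t.2 j) => h.
      by rewrite ifT // inE.
    rewrite ifF //; apply/negbTE/negP; rewrite inE => /= h'.
    by move: h; rewrite h' eqxx.
  set bE := (\esum_(t in _ `&` ~` Ax) _)%E.
  have hb0 : (0 <= bE)%E by apply: esum_ge0 => t _; rewrite lee_fin.
  have hbB : (bE <= (c^-1 * Cp)%:E)%E.
    apply: le_trans Bc; apply: esum_sub; last by move=> t _.
    by move=> t [[St _] nA].
  have hbf : bE \is a fin_num.
    by rewrite ge0_fin_numE //; apply: le_lt_trans hbB _; exact: ltry.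
  exists (fine bE); split.
  - exact: fine_ge0.
  - by have := fine_le hbf (isT : (c^-1 * Cp)%:E \is a fin_num) hbB.
  - by rewrite e1 fineD.
have SL1 : \sum_(t <- L) P (x, i) t <= 1.
  have := @esum_sub R _ A Sigma (P (x, i)) ltac:(by move=> t []) ltac:(by move=> t _).
  by rewrite P1 // esum_finset // lee_fin.
have h00 : 0 <= h0 by apply: ltW.
have rh0 : `|r| * h0 <= 1/4.
  move: h0b; rewrite ler_pdivlMr; last by nra.
  move=> H; nra.
have ptb t : t \in L -> `|t.1 `^ r - x `^ r| <= x `^ r * (4 * `|r| * h0).
  rewrite memL inE => -[St At]; move: At; rewrite /Ax /= => At.
  have t0 := Sge0 _ St.
  pose v := t.1 / x.
  have tv : t.1 = x * v by rewrite /v mulrC divfK ?gt_eqF.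
  have v1 : `|v - 1| <= h0.
    have -> : v - 1 = (t.1 - x) / x by rewrite /v mulrBl divff ?gt_eqF.
    rewrite normrM normfV (gtr0_norm x0) ler_pdivrMr //.
    exact: le_trans At xzh.
  have v0 : 0 < v by move: v1; rewrite ler_norml => /andP[? ?]; lra.
  rewrite tv powRM; [|exact: ltW|exact: ltW].
  rewrite -{2}(mulr1 (x `^ r)) -mulrBr normrM ger0_norm ?powR_ge0 //.
  by apply: ler_wpM2l; [exact: powR_ge0 | exact: pow_near1].
pose a j := \sum_(t <- L) (if t.2 == j then P (x, i) t else 0).
pose q j := qprob Sigma P x i j.
pose bf j := q j - a j.
have bfb j : 0 <= bf j /\ bf j <= c^-1 * Cp.
  have [b [b0 b1 qe]] := qdec j.
  by rewrite /bf /q /a qe addrAC subrr add0r.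
pose T1 := \sum_(t <- L) P (x, i) t * g t.2 * (t.1 `^ r - x `^ r).
pose T2 := \sum_(j : S) (g j - g i) * bf j.
pose T0 := \sum_(t <- L) P (x, i) t * (g t.2 * t.1 `^ r - g i * x `^ r).
exists (T0 - x `^ r * \sum_(j : S) (g j - g i) * q j); split; last first.
  by rewrite kexp; congr EFin; rewrite /T0 /q; ring.
have ee : T0 - x `^ r * \sum_(j : S) (g j - g i) * q j = T1 - x `^ r * T2.
  have sa : \sum_(j : S) (g j - g i) * q j =
      \sum_(t <- L) (g t.2 - g i) * P (x, i) t + T2.
    have -> : \sum_(j : S) (g j - g i) * q j =
        \sum_(j : S) (g j - g i) * a j + T2.
      rewrite /T2 -big_split /=; apply: eq_bigr => j _.
      rewrite /bf; ring.
    congr (_ + _).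
    rewrite /a; under eq_bigr do rewrite mulr_sumr.
    rewrite exchange_big /=; apply: eq_bigr => t _.
    rewrite (bigD1 t.2) //= eqxx big1 ?addr0 // => j.
    by rewrite eq_sym => /negbTE ->; rewrite mulr0.
  rewrite sa mulrDr opprD addrA; congr (_ - _).
  rewrite /T0 /T1 mulr_sumr -sumrB; apply: eq_bigr => t _; ring.
rewrite ee.
have X0 : 0 <= x `^ r by apply: powR_ge0.
have T1b : `|T1| <= G * (x `^ r * (4 * `|r| * h0)).
  apply: le_trans (ler_norm_sum _ _ _) _.
  apply: le_trans (_ : \sum_(t <- L) P (x, i) t * (G * (x `^ r * (4 * `|r| * h0))) <= _).
    rewrite big_seq [X in _ <= X]big_seq; apply: ler_sum => t tL.
    rewrite -mulrA normrM ger0_norm //; apply: ler_wpM2l => //.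
    rewrite normrM; apply: ler_pM => //; last exact: ptb.
    by rewrite /G (bigD1 t.2) //= lerDl sumr_ge0.
  rewrite -mulr_suml; rewrite -[X in _ <= X]mul1r; apply: ler_wpM2r => //.
  by rewrite mulr_ge0 // mulr_ge0 // mulr_ge0.
have T2b : `|T2| <= K * (c^-1 * Cp).
  apply: le_trans (ler_norm_sum _ _ _) _.
  rewrite /K mulr_suml; apply: ler_sum => j _.
  have [b0 b1] := bfb j.
  by rewrite normrM (ger0_norm b0); apply: ler_wpM2l.
have Qb : G * (4 * `|r| * h0) <= eps / 2.
  move: h0c; rewrite ler_pdivlMr; last by nra.
  move=> H.
  have : 0 <= G * h0 by apply: mulr_ge0.
  have : 0 <= `|r| * h0 by apply: mulr_ge0.
  move=> ? ?; nra.
have Wb : K * (c^-1 * Cp) <= eps / 2.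
  have w0 : 0 < c^-1 by rewrite invr_gt0.
  have wc : c^-1 * c = 1 by rewrite mulVf ?gt_eqF.
  have Dc : D <= c * eps by move: cD; rewrite ler_pdivrMr.
  have wD : c^-1 * D <= eps.
    by have := ler_wpM2l (ltW w0) Dc; rewrite /= [c^-1 * (c * eps)]mulrA wc mul1r.
  have cpa : Cp <= `|Cp| + 1 by have := ler_norm Cp; lra.
  have : K * (c^-1 * Cp) <= (K + 1) * (c^-1 * (`|Cp| + 1)).
    apply: le_trans (_ : K * (c^-1 * (`|Cp| + 1)) <= _).
      by apply: ler_wpM2l => //; apply: ler_wpM2l => //; apply: ltW.
    apply: ler_wpM2r; last lra.
    by apply: mulr_ge0; [apply: ltW | lra].
  move: wD; rewrite /D => wD H.
  have : (K + 1) * (c^-1 * (`|Cp| + 1)) = c^-1 * (2 * (K + 1) * (`|Cp| + 1)) / 2.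
    by field; rewrite ?gt_eqF.
  lra.
apply: le_trans (ler_normB _ _) _.
rewrite normrM (ger0_norm X0).
have : G * (x `^ r * (4 * `|r| * h0)) = x `^ r * (G * (4 * `|r| * h0)) by ring.
move=> E1.
have H1 : x `^ r * (G * (4 * `|r| * h0)) <= x `^ r * (eps / 2) by apply: ler_wpM2l.
have H2 : x `^ r * `|T2| <= x `^ r * (eps / 2).
  by apply: ler_wpM2l => //; apply: le_trans T2b Wb.
have : eps * x `^ r = x `^ r * (eps / 2) + x `^ r * (eps / 2) by field.
lra.
Qed.
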